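(* Let $k$ be a real division algebra and $a_1,\dots,a_n\in k$. Define recursively, for strings of digits (with $\wedge$ the empty string): $P[\wedge]=0$, $Q[\wedge]=1$, $P[a_n]=1$, $Q[a_n]=a_n$, and for $i<n$, $P[a_i,\dots,a_n]=Q[a_{i+1},\dots,a_n]$, $Q[a_i,\dots,a_n]=a_iQ[a_{i+1},\dots,a_n]+P[a_{i+1},\dots,a_n]$. Let $Q_n=Q[a_1,\dots,a_n]$. If $Q[a_i,\dots,a_n]\neq0$ for all $1\le i\le n$, then \[\prod_{i=0}^{n-1}\left\|T^{-1}_{a_{i+1}}\cdots T^{-1}_{a_n}0\right\|=\frac{1}{\|Q_n\|}.\]
   Context: $k\in\{\mathbb{R},\mathbb{C},\mathbb{H},\mathbb{O}\}$ with Euclidean norm $\|x\|^2=x\overline x$; $T_a^{-1}x=(x+a)^{-1}$. *)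

(* Defs.v *)
From Stdlib Require Import Reals List.
Import ListNotations.
Open Scope R_scope.

(* The real division algebras R, C, H, O obtained by the Cayley--Dickson
   construction: CD 0 = R, CD 1 = C, CD 2 = H, CD 3 = O. *)
Record CDalg := mkCD {
  car : Type;
  czero : car;
  cone : car;
  cadd : car -> car -> car;
  copp : car -> car;
  cmul : car -> car -> car;
  cconj : car -> car;
  cscale : R -> car -> car;
  cre : car -> R
}.

Definition CDbase : CDalg :=
  mkCD R 0 1 Rplus Ropp Rmult (fun x => x) Rmult (fun x => x).

(* (a,b)(c,d) = (ac - conj(d) b, d a + b conj(c)),  conj(a,b) = (conj a, -b) *)
Definition CDdouble (A : CDalg) : CDalg :=
  mkCD (car A * car A)
    (czero A, czero A)
    (cone A, czero A)
    (fun x y => (cadd A (fst x) (fst y), cadd A (snd x) (snd y)))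
    (fun x => (copp A (fst x), copp A (snd x)))
    (fun x y =>
       (cadd A (cmul A (fst x) (fst y)) (copp A (cmul A (cconj A (snd y)) (snd x))),
        cadd A (cmul A (snd y) (fst x)) (cmul A (snd x) (cconj A (fst y)))))
    (fun x => (cconj A (fst x), copp A (snd x)))
    (fun r x => (cscale A r (fst x), cscale A r (snd x)))
    (fun x => cre A (fst x)).

Fixpoint CD (m : nat) : CDalg :=
  match m with
  | O => CDbase
  | S m' => CDdouble (CD m')
  end.

Section Ops.
Variable A : CDalg.

Definition cnorm (x : car A) : R := sqrt (cre A (cmul A x (cconj A x))).

Definition cinv (x : car A) : car A :=
  cscale A (/ (cre A (cmul A x (cconj A x)))) (cconj A x).

Definition Tinv (a x : car A) : car A := cinv (cadd A x a).

Definition Tchain (l : list (car A)) : car A :=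
  fold_right Tinv (czero A) l.

Fixpoint PQ (l : list (car A)) : car A * car A :=
  match l with
  | [] => (czero A, cone A)
  | [an] => (cone A, an)
  | ai :: rest =>
      let pq := PQ rest in
      (snd pq, cadd A (cmul A ai (snd pq)) (fst pq))
  end.

Definition Pst (l : list (car A)) : car A := fst (PQ l).
Definition Qst (l : list (car A)) : car A := snd (PQ l).

End Ops.

(* Main.v *)
Require Import Defs.
From Stdlib Require Import Reals List Lra Lia.
Import ListNotations.
Open Scope R_scope.
Definition NN (A : CDalg) (x : car A) : R := cre A (cmul A x (cconj A x)).

Record Good (A : CDalg) : Prop := {
  g_mul : forall x y, NN A (cmul A x y) = NN A x * NN A y;
  g_pos : forall x, 0 <= NN A x;
  g_zero : forall x, NN A x = 0 -> x = czero A;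
  g_one : NN A (cone A) = 1;
  g_dist : forall x a y, cmul A (cadd A x a) y = cadd A (cmul A x y) (cmul A a y);
  g_inv : forall u y, NN A u <> 0 -> cmul A (cinv A u) (cmul A u y) = y;
  g_mul1 : forall a, cmul A a (cone A) = a;
  g_add0 : forall a, cadd A (czero A) a = a;
  g_addC : forall a b, cadd A a b = cadd A b a;
  g_mul0 : forall y, cmul A (czero A) y = czero A
}.

Section G.
Variable A : CDalg.
Hypothesis G : Good A.

Lemma NN_nz x : x <> czero A -> NN A x <> 0.
Proof. intros H E; apply H, (g_zero _ G), E. Qed.

Lemma invar l : (forall i, (i < length l)%nat -> Qst A (skipn i l) <> czero A) ->
  cmul A (Tchain A l) (Qst A l) = Pst A l.
Proof.
  induction l as [|a rest IH]; intros H.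
  - apply (g_mul0 _ G).
  - destruct rest as [|b r].
    + cbn. unfold Tinv. rewrite (g_add0 _ G).
      rewrite <- (g_mul1 _ G a) at 2. apply (g_inv _ G).
      apply NN_nz. apply (H 0%nat). cbn; lia.
    + assert (IH' := IH (fun i Hi => H (S i) ltac:(cbn in *; lia))).
      change (Tchain A (a :: b :: r)) with (Tinv A a (Tchain A (b :: r))).
      unfold Tinv.
      set (t := Tchain A (b :: r)) in *.
      change (Qst A (a :: b :: r)) with
        (cadd A (cmul A a (Qst A (b :: r))) (Pst A (b :: r))).
      change (Pst A (a :: b :: r)) with (Qst A (b :: r)).
      set (Q' := Qst A (b :: r)) in *. set (P' := Pst A (b :: r)) in *.
      assert (E : cmul A (cadd A t a) Q' = cadd A (cmul A a Q') P').
      { rewrite (g_dist _ G), IH'. apply (g_addC _ G). }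
      rewrite <- E. apply (g_inv _ G).
      intros Z. assert (HQ := H 0%nat ltac:(cbn; lia)). cbn [skipn] in HQ.
      change (Qst A (a :: b :: r)) with (cadd A (cmul A a Q') P') in HQ.
      apply (NN_nz _ HQ). rewrite <- E, (g_mul _ G), Z. ring.
Qed.

Lemma main_gen l : (forall i, (i < length l)%nat -> Qst A (skipn i l) <> czero A) ->
  fold_right Rmult 1
    (map (fun i => cnorm A (Tchain A (skipn i l))) (seq 0 (length l)))
  = 1 / cnorm A (Qst A l).
Proof.
  induction l as [|a rest IH]; intros H.
  - cbn. unfold cnorm. change (cre A (cmul A (cone A) (cconj A (cone A)))) with (NN A (cone A)).
    rewrite (g_one _ G), sqrt_1. field.
  - cbn [length]. rewrite <- cons_seq. cbn [map fold_right].
    rewrite <- seq_shift, map_map. cbn [skipn].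
    rewrite IH by (intros i Hi; apply (H (S i)); cbn; lia).
    assert (Inv := invar (a :: rest) H).
    assert (HP : Pst A (a :: rest) = Qst A rest) by (destruct rest; reflexivity).
    rewrite HP in Inv.
    assert (HQ := H 0%nat ltac:(cbn; lia)). cbn [skipn] in HQ.
    assert (HR : NN A (Qst A rest) <> 0).
    { destruct rest as [|b r]. cbn. rewrite (g_one _ G). lra.
      apply NN_nz, (H 1%nat). cbn; lia. }
    apply (f_equal (NN A)) in Inv. rewrite (g_mul _ G) in Inv.
    unfold cnorm. fold (NN A (Qst A rest)) (NN A (Tchain A (a :: rest))) (NN A (Qst A (a :: rest))).
    rewrite <- Inv, sqrt_mult by apply (g_pos _ G).
    assert (0 < sqrt (NN A (Qst A (a :: rest)))).
    { apply sqrt_lt_R0. destruct (g_pos _ G (Qst A (a :: rest))) as [h|h]; auto.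
      exfalso; apply (NN_nz _ HQ); auto. }
    assert (0 < sqrt (NN A (Tchain A (a :: rest)))).
    { apply sqrt_lt_R0. destruct (g_pos _ G (Tchain A (a :: rest))) as [h|h]; auto.
      exfalso; apply HR. rewrite <- Inv, <- h; ring. }
    field. lra.
Qed.
End G.
Ltac dx x := let t := type of x in
  let t' := eval cbn in t in
  match t' with
  | prod _ _ => let a := fresh "a" in let b := fresh "b" in destruct x as [a b]; dx a; dx b
  | _ => idtac end.

Ltac peq := repeat match goal with |- (_, _) = (_, _) => f_equal end.
Lemma good0 : Good (CD 0).
Proof.
  assert (alt : forall u y, cmul (CD 0) (cconj (CD 0) u) (cmul (CD 0) u y) = cscale (CD 0) (NN _ u) y).
  { intros u y; dx u; dx y; unfold NN; cbn; peq; ring. }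
  assert (sc : forall s x y, cmul (CD 0) (cscale (CD 0) s x) y = cscale (CD 0) s (cmul (CD 0) x y)).
  { intros s x y; dx x; dx y; cbn; peq; ring. }
  assert (ss : forall s t y, cscale (CD 0) s (cscale (CD 0) t y) = cscale (CD 0) (s*t) y).
  { intros s t y; dx y; cbn; peq; ring. }
  assert (s1 : forall y, cscale (CD 0) 1 y = y).
  { intros y; dx y; cbn; peq; ring. }
  split.
  - intros x y; unfold NN; dx x; dx y; cbn. ring.
  - intros x; unfold NN; dx x; cbn. nra.
  - intros x; unfold NN; dx x; cbn; intros H; peq; nra.
  - unfold NN; cbn; ring.
  - intros x a y; dx x; dx a; dx y; cbn; peq; ring.
  - intros u y H. unfold cinv. fold (NN _ u). rewrite sc, alt, ss, Rinv_l by exact H. apply s1.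
  - intros x; dx x; cbn; peq; ring.
  - intros x; dx x; cbn; peq; ring.
  - intros x y; dx x; dx y; cbn; peq; ring.
  - intros x; dx x; cbn; peq; ring.
Qed.
Lemma good1 : Good (CD 1).
Proof.
  assert (alt : forall u y, cmul (CD 1) (cconj (CD 1) u) (cmul (CD 1) u y) = cscale (CD 1) (NN _ u) y).
  { intros u y; dx u; dx y; unfold NN; cbn; peq; ring. }
  assert (sc : forall s x y, cmul (CD 1) (cscale (CD 1) s x) y = cscale (CD 1) s (cmul (CD 1) x y)).
  { intros s x y; dx x; dx y; cbn; peq; ring. }
  assert (ss : forall s t y, cscale (CD 1) s (cscale (CD 1) t y) = cscale (CD 1) (s*t) y).
  { intros s t y; dx y; cbn; peq; ring. }
  assert (s1 : forall y, cscale (CD 1) 1 y = y).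
  { intros y; dx y; cbn; peq; ring. }
  split.
  - intros x y; unfold NN; dx x; dx y; cbn. ring.
  - intros x; unfold NN; dx x; cbn. nra.
  - intros x; unfold NN; dx x; cbn; intros H; peq; nra.
  - unfold NN; cbn; ring.
  - intros x a y; dx x; dx a; dx y; cbn; peq; ring.
  - intros u y H. unfold cinv. fold (NN _ u). rewrite sc, alt, ss, Rinv_l by exact H. apply s1.
  - intros x; dx x; cbn; peq; ring.
  - intros x; dx x; cbn; peq; ring.
  - intros x y; dx x; dx y; cbn; peq; ring.
  - intros x; dx x; cbn; peq; ring.
Qed.
Lemma good2 : Good (CD 2).
Proof.
  assert (alt : forall u y, cmul (CD 2) (cconj (CD 2) u) (cmul (CD 2) u y) = cscale (CD 2) (NN _ u) y).
  { intros u y; dx u; dx y; unfold NN; cbn; peq; ring. }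
  assert (sc : forall s x y, cmul (CD 2) (cscale (CD 2) s x) y = cscale (CD 2) s (cmul (CD 2) x y)).
  { intros s x y; dx x; dx y; cbn; peq; ring. }
  assert (ss : forall s t y, cscale (CD 2) s (cscale (CD 2) t y) = cscale (CD 2) (s*t) y).
  { intros s t y; dx y; cbn; peq; ring. }
  assert (s1 : forall y, cscale (CD 2) 1 y = y).
  { intros y; dx y; cbn; peq; ring. }
  split.
  - intros x y; unfold NN; dx x; dx y; cbn. ring.
  - intros x; unfold NN; dx x; cbn. nra.
  - intros x; unfold NN; dx x; cbn; intros H; peq; nra.
  - unfold NN; cbn; ring.
  - intros x a y; dx x; dx a; dx y; cbn; peq; ring.
  - intros u y H. unfold cinv. fold (NN _ u). rewrite sc, alt, ss, Rinv_l by exact H. apply s1.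
  - intros x; dx x; cbn; peq; ring.
  - intros x; dx x; cbn; peq; ring.
  - intros x y; dx x; dx y; cbn; peq; ring.
  - intros x; dx x; cbn; peq; ring.
Qed.
Lemma good3 : Good (CD 3).
Proof.
  assert (alt : forall u y, cmul (CD 3) (cconj (CD 3) u) (cmul (CD 3) u y) = cscale (CD 3) (NN _ u) y).
  { intros u y; dx u; dx y; unfold NN; cbn; peq; ring. }
  assert (sc : forall s x y, cmul (CD 3) (cscale (CD 3) s x) y = cscale (CD 3) s (cmul (CD 3) x y)).
  { intros s x y; dx x; dx y; cbn; peq; ring. }
  assert (ss : forall s t y, cscale (CD 3) s (cscale (CD 3) t y) = cscale (CD 3) (s*t) y).
  { intros s t y; dx y; cbn; peq; ring. }
  assert (s1 : forall y, cscale (CD 3) 1 y = y).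
  { intros y; dx y; cbn; peq; ring. }
  split.
  - intros x y; unfold NN; dx x; dx y; cbn. ring.
  - intros x; unfold NN; dx x; cbn. nra.
  - intros x; unfold NN; dx x; cbn; intros H; peq; nra.
  - unfold NN; cbn; ring.
  - intros x a y; dx x; dx a; dx y; cbn; peq; ring.
  - intros u y H. unfold cinv. fold (NN _ u). rewrite sc, alt, ss, Rinv_l by exact H. apply s1.
  - intros x; dx x; cbn; peq; ring.
  - intros x; dx x; cbn; peq; ring.
  - intros x y; dx x; dx y; cbn; peq; ring.
  - intros x; dx x; cbn; peq; ring.
Qed.
Theorem lemma2p3 (m : nat) (hm : (m <= 3)%nat) (l : list (car (CD m))) :
  (forall i : nat, (i < length l)%nat -> Qst (CD m) (skipn i l) <> czero (CD m)) ->
  fold_right Rmult 1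
    (map (fun i => cnorm (CD m) (Tchain (CD m) (skipn i l))) (seq 0 (length l)))
  = 1 / cnorm (CD m) (Qst (CD m) l).
Proof.
  apply main_gen.
  destruct m as [|[|[|[|m]]]]; [exact good0|exact good1|exact good2|exact good3|lia].
Qed.
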